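(* Let $A$ be a commutative ring, $E$ a non-zero $A$-module and $R=A\propto E$ the trivial ring extension of $A$ by $E$. Then $R$ is a chain ring if and only if $A$ is a valuation domain and $E$ is a uniserial divisible $A$-module.
   Context: All rings are commutative with identity. The trivial ring extension $R=A\propto E$ is the ring with underlying additive group $A\times E$ and multiplication $(a,e)(a',e')=(aa',ae'+a'e)$. A module is uniserial if its submodules are totally ordered by inclusion; a ring is a chain ring if it is uniserial as a module over itself. A module $E$ over a domain $A$ is divisible if $aE=E$ for every non-zero $a\in A$. *)

(* Defs.v *)
From HB Require Import structures.
From mathcomp Require Import all_boot all_order all_algebra.
Set Implicit Arguments. Unset Strict Implicit. Unset Printing Implicit Defensive.
Import Order.TTheory GRing.Theory.
Local Open Scope ring_scope.

Definition submodule (R : comNzRingType) (M : lmodType R) (S : pred M) : Prop :=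
  [/\ 0 \in S,
      (forall x y, x \in S -> y \in S -> x + y \in S) &
      (forall (r : R) x, x \in S -> r *: x \in S)].

Definition uniserial (R : comNzRingType) (M : lmodType R) : Prop :=
  forall S T : pred M, submodule S -> submodule T ->
    {subset S <= T} \/ {subset T <= S}.

Definition chain_ring (R : comNzRingType) : Prop := uniserial R^o.

Definition is_domain (R : comNzRingType) : Prop :=
  (1 : R) != 0 /\ forall a b : R, a * b = 0 -> a = 0 \/ b = 0.

Definition valuation_domain (R : comNzRingType) : Prop :=
  is_domain R /\ forall a b : R, (exists c, b = c * a) \/ (exists c, a = c * b).

Definition divisible (R : comNzRingType) (M : lmodType R) : Prop :=
  forall (a : R), a != 0 -> forall e : M, exists e' : M, e = a *: e'.

Definition triv_ext (A : comNzRingType) (E : lmodType A) : Type := (A * E)%type.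

Section TrivExt.
Variables (A : comNzRingType) (E : lmodType A).

HB.instance Definition _ := GRing.Zmodule.on (triv_ext E).

Definition te_one : triv_ext E := (1, 0).
Definition te_mul (x y : triv_ext E) : triv_ext E :=
  (x.1 * y.1, x.1 *: y.2 + y.1 *: x.2).

Lemma te_mulA : associative te_mul.
Proof.
case=> a e [b f] [c g]; rewrite /te_mul /=; congr pair; first by rewrite mulrA.
rewrite !scalerDr !scalerA addrA; congr (_ + _ + _); by rewrite mulrC.
Qed.

Lemma te_mulC : commutative te_mul.
Proof. by case=> a e [b f]; rewrite /te_mul /= mulrC addrC. Qed.

Lemma te_mul1 : left_id te_one te_mul.
Proof. by case=> a e; rewrite /te_mul /= mul1r scale1r scaler0 addr0. Qed.

Lemma te_mulDl : left_distributive te_mul +%R.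
Proof.
case=> a e [b f] [c g]; rewrite /te_mul /=; congr pair; first by rewrite mulrDl.
rewrite scalerDl scalerDr; rewrite -!addrA; congr (_ + _).
by rewrite addrCA.
Qed.

Lemma te_one_neq0 : te_one != 0.
Proof. by apply/negP => /eqP [] /eqP; rewrite oner_eq0. Qed.

HB.instance Definition _ := GRing.Zmodule_isComNzRing.Build (triv_ext E)
  te_mulA te_mulC te_mul1 te_mulDl te_one_neq0.

Lemma te_mulE (x y : triv_ext E) :
  x * y = ((x.1 * y.1 : A), x.1 *: y.2 + y.1 *: x.2) :> triv_ext E.
Proof. by []. Qed.

End TrivExt.

(* Main.v *)
Require Import Defs.
From HB Require Import structures.
From mathcomp Require Import all_boot all_order all_algebra.
From Stdlib Require Import Classical ClassicalEpsilon.
Set Implicit Arguments. Unset Strict Implicit. Unset Printing Implicit Defensive.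
Import GRing.Theory.
Local Open Scope ring_scope.

Definition asb (P : Prop) : bool :=
  if excluded_middle_informative P then true else false.

Lemma asbE (P : Prop) : asb P = true <-> P.
Proof. by rewrite /asb; case: excluded_middle_informative. Qed.

Definition pcomp (R : comNzRingType) (M : lmodType R) : Prop :=
  forall x y : M, (exists r : R, x = r *: y) \/ (exists r : R, y = r *: x).

Lemma pcomp_uni (R : comNzRingType) (M : lmodType R) :
  uniserial M <-> pcomp M.
Proof.
split.
  move=> U x y.
  pose cyc (y : M) : pred M := fun z => asb (exists r : R, z = r *: y).
  have sub y0 : submodule (cyc y0).
    split.
    - apply/asbE; exists 0; by rewrite scale0r.
    - move=> u v /asbE [r ->] /asbE [s ->]; apply/asbE; exists (r + s).
      by rewrite scalerDl.
    - move=> r u /asbE [s ->]; apply/asbE; exists (r * s); by rewrite scalerA.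
  have mem y0 : y0 \in cyc y0.
    by apply/asbE; exists 1; rewrite scale1r.
  case: (U _ _ (sub x) (sub y)) => H.
    by move: (H _ (mem x)) => /asbE; left.
  by move: (H _ (mem y)) => /asbE; right.
move=> P S T [S0 SD SZ] [T0 TD TZ].
apply: NNPP; move=> Hn.
apply Hn; left => x xS.
apply: NNPP; move=> xT.
apply Hn; right => y yT.
apply: NNPP; move=> yS.
case: (P x y) => [[r Hr]|[r Hr]].
  by apply: xT; rewrite Hr; apply: TZ.
by apply: yS; rewrite Hr; apply: SZ.
Qed.

Section Main.
Variables (A : comNzRingType) (E : lmodType A).

Lemma pcompR : pcomp (triv_ext E)^o <->
  forall x y : triv_ext E, (exists r, x = r * y) \/ (exists r, y = r * x).
Proof. by split=> H x y; exact: H x y. Qed.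

Lemma step (a b c : A) (e f : E) : divisible E -> b != 0 -> a = c * b ->
  exists r : triv_ext E, ((a, e) : triv_ext E) = r * (b, f).
Proof.
move=> D nb ->; have [g Hg] := D b nb (e - c *: f).
exists (c, g); rewrite te_mulE /=; congr pair.
by rewrite -Hg addrC subrK.
Qed.

End Main.

Theorem proposition1p1 (A : comNzRingType) (E : lmodType A) :
  (exists e : E, e != 0) ->
  (chain_ring (triv_ext E) <->
   valuation_domain A /\ uniserial E /\ divisible E).
Proof.
move=> [e0 ne0]; rewrite /chain_ring pcomp_uni pcompR pcomp_uni.
split.
  move=> H.
  have D : divisible E.
    move=> a na e.
    case: (H ((0, e) : triv_ext E) (a, 0)) => [[r]|[r]]; rewrite te_mulE /=.
      move=> [_ ->]; exists r.2; by rewrite scaler0 add0r.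
    by move=> [ha _]; move: na; rewrite ha mulr0 eqxx.
  split; last split => //.
    split.
      split; first exact: oner_neq0.
      move=> a b ab.
      case: (eqVneq a 0) => [->|na]; first by left.
      case: (eqVneq b 0) => [->|nb]; first by right.
      exfalso; have [f Hf] := D a na e0; have [g Hg] := D b nb f.
      by move: ne0; rewrite Hf Hg scalerA ab scale0r eqxx.
    move=> a b.
    case: (H ((a, 0) : triv_ext E) (b, 0)) => [[r]|[r]]; rewrite te_mulE /=.
      by move=> [-> _]; right; exists r.1.
    by move=> [-> _]; left; exists r.1.
  move=> x y.
  case: (H ((0, x) : triv_ext E) (0, y)) => [[r]|[r]]; rewrite te_mulE /=.
    by move=> [_ ->]; left; exists r.1; rewrite scale0r addr0.
  by move=> [_ ->]; right; exists r.1; rewrite scale0r addr0.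
move=> [[_ V] [P D]] [a e] [b f].
have both : a = 0 -> b = 0 ->
  (exists r : triv_ext E, ((a, e) : triv_ext E) = r * (b, f)) \/
  (exists r : triv_ext E, ((b, f) : triv_ext E) = r * (a, e)).
  move=> -> ->; case: (P e f) => [[s ->]|[s ->]].
    by left; exists (s, 0); rewrite te_mulE /= mulr0 scale0r addr0.
  by right; exists (s, 0); rewrite te_mulE /= mulr0 scale0r addr0.
case: (V a b) => [[c Hc]|[c Hc]].
  case: (eqVneq a 0) => [a0|na].
    by apply: both => //; rewrite Hc a0 mulr0.
  by right; exact: (step _ _ D na Hc).
case: (eqVneq b 0) => [b0|nb].
  by apply: both => //; rewrite Hc b0 mulr0.
by left; exact: (step _ _ D nb Hc).
Qed.
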